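(* Let $\mathcal A=\mathbb CS_3\cong M_2(\mathbb C)\oplus\mathbb C\oplus\mathbb C$ with its Hopf algebra structure $\Delta g=g\otimes g$, $\epsilon(g)=1$, $S(g)=g^{-1}$. Let $(\mathcal A,\mathcal H,\pi,J,\gamma)$ be any finite complex spectral triple with Dirac operator $D$ whose first-order calculus $(\Omega^1_D,d_D)$, $\Omega^1_D=\mathrm{span}\{\pi(a)[D,\pi(b)]\}$, $d_Da=[D,\pi(a)]$, is nonzero. Then $(\Omega^1_D,d_D)$ is not isomorphic (as an $\mathcal A$-bimodule with derivation) to any bicovariant first-order differential calculus over the Hopf algebra $\mathbb CS_3$.
   Context: A finite complex spectral triple over $\mathcal A=\bigoplus_i M_{n_i}(\mathbb C)$: a finite-dimensional Hilbert space $\mathcal H$, a faithful $*$-representation $\pi$, an antilinear isometry $J$ with $J^2=1$ such that $\pi^0(a):=J\pi(a)^*J$ is a representation of the opposite algebra commuting with $\pi(\mathcal A)$, and a grading $\gamma=\gamma^*$, $\gamma^2=1$, commuting with $J$ and $\pi(\mathcal A)$ and of the form $\sum_m\pi(x_m)\pi^0(y_m)$. A Dirac operator is a self-adjoint $D$ with $DJ=JD$, $D\gamma=-\gamma D$, $[[D,\pi(a)],\pi^0(b)]=0$ for all $a,b$. Here $\mathcal A$-bimodule structure on $\Omega^1_D$ is via $\pi$ (left and right operator multiplication), with the identification $\mathbb CS_3\cong M_2(\mathbb C)\oplus\mathbb C\oplus\mathbb C$ given by the direct sum of the 2-dimensional irreducible, trivial and sign representations of $S_3$. A first-order differential calculus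 $(\Omega^1,d)$ over a Hopf algebra $\mathcal B$ is bicovariant (in Woronowicz's sense) if there are a left coaction $\Delta_L:\Omega^1\to\mathcal B\otimes\Omega^1$ and a right coaction $\Delta_R:\Omega^1\to\Omega^1\otimes\mathcal B$, commuting with each other, making $\Omega^1$ a bicovariant bimodule, such that $\Delta_L(x\,dy)=\Delta(x)(\mathrm{id}\otimes d)\Delta(y)$ and $\Delta_R(x\,dy)=\Delta(x)(d\otimes\mathrm{id})\Delta(y)$. *)

(* Defs.v *)
From HB Require Import structures.
From mathcomp Require Import all_boot all_algebra all_fingroup.
From mathcomp Require Import reals complex.
Set Implicit Arguments.
Unset Strict Implicit.
Unset Printing Implicit Defensive.
Import GRing.Theory Num.Theory.
Local Open Scope ring_scope.

(* The complex numbers are modelled as R[i] for an arbitrary realType R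
   (every realType is isomorphic to the reals). *)

Section Defs.
Variable R : realType.
Local Notation C := R[i].

(* The group algebra CS_3: functions S_3 -> C, a = sum_g a(g) g.       *)
Definition CS3 := {ffun 'S_3 -> C}.

Definition bas (g : 'S_3) : CS3 := [ffun x => (x == g)%:R].

Definition mulA (a b : CS3) : CS3 :=
  [ffun g => \sum_(h : 'S_3) a h * b (h^-1 * g)%g].

Definition oneA : CS3 := bas 1%g.

(* the *-structure transported from M_2(C)+C+C through the (unitary)
   irreducible representations: g^* = g^{-1}, extended antilinearly *)
Definition starA (a : CS3) : CS3 := [ffun g => (a (g^-1)%g)^*].

(* Finite-dimensional Hilbert space C^n, operators = n x n matrices.    *)
Definition adjm n (A : 'M[C]_n) : 'M[C]_n := map_mx (fun z : C => z^*) A^T.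

Definition cinner n (u v : 'cV[C]_n) : C := \sum_(i < n) (u i 0)^* * v i 0.

Definition commut n (A B : 'M[C]_n) : 'M[C]_n := A *m B - B *m A.

Definition mat_of n (f : 'cV[C]_n -> 'cV[C]_n) : 'M[C]_n :=
  \matrix_(i < n, j < n) f (delta_mx j 0) i 0.

Definition antilinear n (J : 'cV[C]_n -> 'cV[C]_n) :=
  forall (c : C) (u v : 'cV[C]_n), J (c *: u + v) = c^* *: J u + J v.

Definition faithful_star_rep n (pi : CS3 -> 'M[C]_n) :=
  [/\ forall (c : C) (a b : CS3), pi (c *: a + b) = c *: pi a + pi b,
      forall a b, pi (mulA a b) = pi a *m pi b,
      forall a, pi (starA a) = adjm (pi a)
    & injective pi].

Definition opp_rep n (pi : CS3 -> 'M[C]_n) (J : 'cV[C]_n -> 'cV[C]_n)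
  (a : CS3) : 'M[C]_n := mat_of (fun v => J (adjm (pi a) *m J v)).

Definition finite_spectral_triple n (pi : CS3 -> 'M[C]_n)
  (J : 'cV[C]_n -> 'cV[C]_n) (gamma : 'M[C]_n) :=
  [/\ faithful_star_rep pi,
      [/\ antilinear J,
          forall v, cinner (J v) (J v) = cinner v v
        & forall v, J (J v) = v],
      [/\ forall (c : C) (a b : CS3),
            opp_rep pi J (c *: a + b) = c *: opp_rep pi J a + opp_rep pi J b,
          forall a b, opp_rep pi J (mulA a b) = opp_rep pi J b *m opp_rep pi J a
        & forall a b, pi a *m opp_rep pi J b = opp_rep pi J b *m pi a]
    &
      [/\ adjm gamma = gamma,
          gamma *m gamma = 1%:M,
          forall v, gamma *m J v = J (gamma *m v),
          forall a, gamma *m pi a = pi a *m gamma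
        & exists s : seq (CS3 * CS3),
            gamma = \sum_(p <- s) pi p.1 *m opp_rep pi J p.2]].

Definition dirac_operator n (pi : CS3 -> 'M[C]_n)
  (J : 'cV[C]_n -> 'cV[C]_n) (gamma D : 'M[C]_n) :=
  [/\ adjm D = D,
      forall v, D *m J v = J (D *m v),
      D *m gamma = - (gamma *m D)
    & forall a b, commut (commut D (pi a)) (opp_rep pi J b) = 0].

Definition in_OmegaD n (pi : CS3 -> 'M[C]_n) (D : 'M[C]_n) (w : 'M[C]_n) :=
  exists s : seq (CS3 * CS3), w = \sum_(p <- s) pi p.1 *m commut D (pi p.2).

Definition is_bimodule (V : lmodType C) (la : CS3 -> V -> V)
  (ra : V -> CS3 -> V) :=
  [/\ [/\ forall a (c : C) u v, la a (c *: u + v) = c *: la a u + la a v,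
          forall a b (c : C) v, la (c *: a + b) v = c *: la a v + la b v,
          forall a (c : C) u v, ra (c *: u + v) a = c *: ra u a + ra v a
        & forall a b (c : C) v, ra v (c *: a + b) = c *: ra v a + ra v b],
      forall a b v, la (mulA a b) v = la a (la b v),
      forall v a b, ra v (mulA a b) = ra (ra v a) b,
      forall a v b, ra (la a v) b = la a (ra v b)
    & (forall v, la oneA v = v) /\ (forall v, ra v oneA = v)].

Definition is_fodc (V : lmodType C) (la : CS3 -> V -> V)
  (ra : V -> CS3 -> V) (d : CS3 -> V) :=
  [/\ is_bimodule la ra,
      forall (c : C) a b, d (c *: a + b) = c *: d a + d b,
      forall a b, d (mulA a b) = la a (d b) + ra (d a) b
    & forall v, exists s : seq (CS3 * CS3), v = \sum_(p <- s) la p.1 (d p.2)].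

(* Elements of CS_3 (x) V are written sum_g g (x) w_g and encoded by the
   family (w_g)_g : {ffun 'S_3 -> V}; likewise V (x) CS_3 (sum_g w_g (x) g).
   The Hopf structure is Delta g = g (x) g, eps g = 1, S g = g^{-1}. *)
Definition is_bicovariant_fodc (V : lmodType C) (la : CS3 -> V -> V)
  (ra : V -> CS3 -> V) (d : CS3 -> V)
  (DL : V -> {ffun 'S_3 -> V}) (DR : V -> {ffun 'S_3 -> V}) :=
  [/\ is_fodc la ra d,
      [/\ forall (c : C) u v g, DL (c *: u + v) g = c *: DL u g + DL v g
        & forall (c : C) u v g, DR (c *: u + v) g = c *: DR u g + DR v g],
      [/\ (* left coaction: (Delta (x) id) DL = (id (x) DL) DL, (eps (x) id) DL = id *)
      [/\ forall v g h, DL (DL v g) h = if g == h then DL v g else 0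
        & forall v, \sum_(g : 'S_3) DL v g = v],
      (* right coaction: (DR (x) id) DR = (id (x) Delta) DR, (id (x) eps) DR = id *)
      [/\ forall v g h, DR (DR v g) h = if h == g then DR v g else 0
        & forall v, \sum_(g : 'S_3) DR v g = v]
      & (* the coactions commute: (id (x) DR) DL = (DL (x) id) DR *)
      forall v g h, DR (DL v g) h = DL (DR v h) g],
      (* bicovariant bimodule:
         DL(a v b) = Delta(a) DL(v) Delta(b), DR(a v b) = Delta(a) DR(v) Delta(b) *)
      [/\ forall a v b m, DL (la a (ra v b)) m =
            \sum_(g : 'S_3) \sum_(k : 'S_3) \sum_(h : 'S_3)
              (if (g * k * h)%g == m
               then (a g * b h) *: la (bas g) (ra (DL v k) (bas h)) else 0)
        & forall a v b m, DR (la a (ra v b)) m =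
            \sum_(g : 'S_3) \sum_(k : 'S_3) \sum_(h : 'S_3)
              (if (g * k * h)%g == m
               then (a g * b h) *: la (bas g) (ra (DR v k) (bas h)) else 0)]
    & (* compatibility with d:
         DL(x dy) = Delta(x) (id (x) d) Delta(y),
         DR(x dy) = Delta(x) (d (x) id) Delta(y) *)
      [/\ forall x y m, DL (la x (d y)) m =
            \sum_(g : 'S_3) \sum_(h : 'S_3)
              (if (g * h)%g == m then (x g * y h) *: la (bas g) (d (bas h)) else 0)
        & forall x y m, DR (la x (d y)) m =
            \sum_(g : 'S_3) \sum_(h : 'S_3)
              (if (g * h)%g == m then (x g * y h) *: la (bas g) (d (bas h)) else 0)]].

Definition iso_calculi n (pi : CS3 -> 'M[C]_n) (D : 'M[C]_n)
  (V : lmodType C) (la : CS3 -> V -> V) (ra : V -> CS3 -> V) (d : CS3 -> V)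
  (phi : 'M[C]_n -> V) :=
  [/\ forall (c : C) w1 w2, in_OmegaD pi D w1 -> in_OmegaD pi D w2 ->
        phi (c *: w1 + w2) = c *: phi w1 + phi w2,
      (forall a w, in_OmegaD pi D w -> phi (pi a *m w) = la a (phi w)) /\
      (forall a w, in_OmegaD pi D w -> phi (w *m pi a) = ra (phi w) a),
      forall w1 w2, in_OmegaD pi D w1 -> in_OmegaD pi D w2 ->
        phi w1 = phi w2 -> w1 = w2,
      forall v, exists2 w, in_OmegaD pi D w & phi w = v
    & forall a, phi (commut D (pi a)) = d a].

End Defs.

(* Main.v *)
From Pilot Require Import Defs.
From HB Require Import structures.
From mathcomp Require Import all_boot all_algebra all_fingroup.
From mathcomp Require Import reals complex.
Set Implicit Arguments. Unset Strict Implicit. Unset Printing Implicit Defensive.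
Import GRing.Theory Num.Theory.
Local Open Scope group_scope.

Definition o0 : 'I_3 := @Ordinal 3 0 isT.
Definition o1 : 'I_3 := @Ordinal 3 1 isT.
Definition o2 : 'I_3 := @Ordinal 3 2 isT.
Definition t1 : 'S_3 := tperm o0 o1.
Definition t2 : 'S_3 := tperm o1 o2.
Definition c3 : 'S_3 := t1 * t2.
Definition c3i : 'S_3 := t2 * t1.

Lemma ord3 (i : 'I_3) : [\/ i = o0, i = o1 | i = o2].
Proof.
case: i => [[|[|[|//]]] Hi].
- by constructor 1; apply: val_inj.
- by constructor 2; apply: val_inj.
- by constructor 3; apply: val_inj.
Qed.

Lemma perm3_eq (g h : 'S_3) : g o0 = h o0 -> g o1 = h o1 -> g o2 = h o2 -> g = h.
Proof.
move=> e0 e1 e2; apply/permP => i; by case: (ord3 i) => ->.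
Qed.

Lemma tpE (x y z : 'I_3) : tperm x y z = if z == x then y else if z == y then x else z.
Proof. by case: tpermP => [->|->|/eqP/negbTE -> /eqP/negbTE ->]; rewrite ?eqxx //; case: eqP => // ->; rewrite eqxx. Qed.
Ltac ev := rewrite ?permM ?perm1 ?tpE //=.

Lemma t1t1 : t1 * t1 = 1. Proof. exact: tperm2. Qed.
Lemma t2t2 : t2 * t2 = 1. Proof. exact: tperm2. Qed.
Lemma c3iE : c3^-1 = c3i. Proof. by rewrite /c3 /c3i invMg !tpermV. Qed.
Lemma t1n1 : t1 != 1.
Proof. apply/eqP => /permP/(_ o0); rewrite perm1 /t1 tpermL. by []. Qed.
Lemma t2n1 : t2 != 1.
Proof. apply/eqP => /permP/(_ o1); rewrite perm1 /t2 tpermL. by []. Qed.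
Lemma c3n1 : c3 != 1.
Proof. apply/eqP => /permP/(_ o0); rewrite perm1 /c3 /t1 /t2; ev. Qed.
Lemma c3in1 : c3i != 1.
Proof. apply/eqP => /permP/(_ o0); rewrite perm1 /c3i /t1 /t2; ev. Qed.
Lemma c3nc3i : c3 != c3i.
Proof. apply/eqP => /permP/(_ o0); rewrite /c3i /c3 /t1 /t2; ev. Qed.

Lemma centr_eq (g h : 'S_3) : (g * h * g^-1 == h) -> g * h = h * g.
Proof. by move/eqP => E; rewrite -{2}E -mulgA mulVg mulg1. Qed.

Lemma injg (g : 'S_3) i j : g i = g j -> i = j.
Proof. exact: perm_inj. Qed.

Lemma ordne (i j : 'I_3) : i = j -> val i = val j. Proof. by move->. Qed.

Ltac fin e0 e1 e2 :=
  first [ by move: (ordne (injg (etrans e0 (esym e1))))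
        | by move: (ordne (injg (etrans e0 (esym e2))))
        | by move: (ordne (injg (etrans e1 (esym e2))))
        | by move=> *; apply/orP; left; apply/eqP; apply: perm3_eq; rewrite ?e0 ?e1 ?e2; ev
        | by move=> *; apply/orP; right; apply/eqP; apply: perm3_eq; rewrite ?e0 ?e1 ?e2; ev
        | by move=> *; apply/or3P; constructor 1; apply/eqP; apply: perm3_eq; rewrite ?e0 ?e1 ?e2; ev
        | by move=> *; apply/or3P; constructor 2; apply/eqP; apply: perm3_eq; rewrite ?e0 ?e1 ?e2; ev
        | by move=> *; apply/or3P; constructor 3; apply/eqP; apply: perm3_eq; rewrite ?e0 ?e1 ?e2; ev
        | (move=> *; match goal with H : _ |- _ => move: (ordne H) => // end) ].

Lemma cent_t1 (g : 'S_3) : g * t1 * g^-1 == t1 -> (g == 1) || (g == t1).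
Proof.
move/centr_eq => E.
have := congr1 (fun p : 'S_3 => p o0) E.
have := congr1 (fun p : 'S_3 => p o1) E.
have := congr1 (fun p : 'S_3 => p o2) E.
rewrite ?/c3 ?/c3i /t1 /t2 !permM; ev.
case: (ord3 (g o0)) => e0; case: (ord3 (g o1)) => e1; case: (ord3 (g o2)) => e2;
  rewrite ?e0 ?e1 ?e2; ev; fin e0 e1 e2.
Qed.
Lemma cent_t2 (g : 'S_3) : g * t2 * g^-1 == t2 -> (g == 1) || (g == t2).
Proof.
move/centr_eq => E.
have := congr1 (fun p : 'S_3 => p o0) E.
have := congr1 (fun p : 'S_3 => p o1) E.
have := congr1 (fun p : 'S_3 => p o2) E.
rewrite ?/c3 ?/c3i /t1 /t2 !permM; ev.
case: (ord3 (g o0)) => e0; case: (ord3 (g o1)) => e1; case: (ord3 (g o2)) => e2;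
  rewrite ?e0 ?e1 ?e2; ev; fin e0 e1 e2.
Qed.
Lemma cent_c3 (g : 'S_3) : g * c3 * g^-1 == c3 -> [|| g == 1, g == c3 | g == c3i].
Proof.
move/centr_eq => E.
have := congr1 (fun p : 'S_3 => p o0) E.
have := congr1 (fun p : 'S_3 => p o1) E.
have := congr1 (fun p : 'S_3 => p o2) E.
rewrite ?/c3 ?/c3i /t1 /t2 !permM; ev.
case: (ord3 (g o0)) => e0; case: (ord3 (g o1)) => e1; case: (ord3 (g o2)) => e2;
  rewrite ?e0 ?e1 ?e2; ev; fin e0 e1 e2.
Qed.

Local Close Scope group_scope.
Local Open Scope ring_scope.

Notation mulA := Pilot.Defs.mulA.

Lemma mulA_bas (R : realType) (g h : 'S_3) :
  mulA (bas R g) (bas R h) = bas R (g * h)%g.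
Proof.
apply/ffunP => x; rewrite /bas !ffunE (bigD1 g) //= big1 => [|k kg]; last first.
  by rewrite !ffunE (negbTE kg) mul0r.
rewrite !ffunE eqxx mul1r addr0; congr (_%:R); congr (nat_of_bool _).
by apply/idP/idP => /eqP E; apply/eqP; [rewrite -E mulKVg | rewrite E mulKg].
Qed.

Section Vpart.
Variables (R : realType) (V : lmodType R[i]) (la : CS3 R -> V -> V)
  (ra : V -> CS3 R -> V) (d : CS3 R -> V) (DL DR : V -> {ffun 'S_3 -> V}).
Hypothesis Hb : is_bicovariant_fodc la ra d DL DR.
Local Notation bas := (bas R).

Lemma lin_gen (f : V -> V) : (forall (c : R[i]) u v, f (c *: u + v) = c *: f u + f v) ->
  [/\ forall u v, f (u + v) = f u + f v, f 0 = 0 & forall c u, f (c *: u) = c *: f u].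
Proof.
move=> H.
have hD u v : f (u + v) = f u + f v by have := H 1 u v; rewrite !scale1r.
have h0 : f 0 = 0 by apply: (addrI (f 0)); rewrite -hD !addr0.
split => // c u; have := H c u 0; rewrite h0 !addr0; exact.
Qed.

Let bim := let: And5 f _ _ _ _ := Hb in let: And4 b _ _ _ := f in b.

Lemma la_lin a : [/\ forall u v, la a (u + v) = la a u + la a v, la a 0 = 0
  & forall c u, la a (c *: u) = c *: la a u].
Proof. apply: lin_gen; by case: bim => [[H _ _ _] _ _ _ _]. Qed.
Lemma ra_lin a : [/\ forall u v, ra (u + v) a = ra u a + ra v a, ra 0 a = 0
  & forall c u, ra (c *: u) a = c *: ra u a].
Proof. apply: (lin_gen (f := fun v => ra v a)); by case: bim => [[_ _ H _] _ _ _ _]. Qed.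
Lemma DL_lin g : [/\ forall u v, DL (u + v) g = DL u g + DL v g, DL 0 g = 0
  & forall c u, DL (c *: u) g = c *: DL u g].
Proof. apply: (lin_gen (f := fun v => DL v g)); by case: Hb => _ [H _] _ _ _. Qed.

Lemma la0 a : la a 0 = 0. Proof. by case: (la_lin a). Qed.
Lemma ra0 a : ra 0 a = 0. Proof. by case: (ra_lin a). Qed.
Lemma laN a u : la a (- u) = - la a u.
Proof. by case: (la_lin a) => _ _ H; rewrite -scaleN1r H scaleN1r. Qed.
Lemma raN a u : ra (- u) a = - ra u a.
Proof. by case: (ra_lin a) => _ _ H; rewrite -scaleN1r H scaleN1r. Qed.
Lemma laZ a c u : la a (c *: u) = c *: la a u. Proof. by case: (la_lin a). Qed.

Lemma la1 u : la (bas 1%g) u = u. Proof. by case: bim => _ _ _ _ []. Qed.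
Lemma ra1 u : ra u (bas 1%g) = u. Proof. by case: bim => _ _ _ _ []. Qed.
Lemma lala g h u : la (bas g) (la (bas h) u) = la (bas (g * h)%g) u.
Proof. by case: bim => _ H _ _ _; rewrite -H mulA_bas. Qed.
Lemma rara g h u : ra (ra u (bas g)) (bas h) = ra u (bas (g * h)%g).
Proof. by case: bim => _ _ H _ _; rewrite -H mulA_bas. Qed.
Lemma rala a u b : ra (la a u) b = la a (ra u b).
Proof. by case: bim => _ _ _ H _; rewrite H. Qed.

Lemma DL_sum I (r : seq I) (P : pred I) F m :
  DL (\sum_(i <- r | P i) F i) m = \sum_(i <- r | P i) DL (F i) m.
Proof.
case: (DL_lin m) => hD h0 _.
by apply: (big_morph (fun v => DL v m)) => // u v; rewrite hD.
Qed.

Lemma DL_id v : v = \sum_g DL v g.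
Proof. by case: Hb => _ _ [[_ H] _ _] _ _; rewrite H. Qed.

Definition hom x h := forall k, DL x k = if h == k then x else 0.

Lemma hom_DL v g : hom (DL v g) g.
Proof. by case: Hb => _ _ [[H _] _ _] _ _ k; rewrite H. Qed.

Lemma DLbas a b v m : DL (la (bas a) (ra v (bas b))) m =
  \sum_k (if (a * k * b == m)%g then la (bas a) (ra (DL v k) (bas b)) else 0).
Proof.
case: Hb => _ _ _ [H _] _; rewrite H.
rewrite (bigD1 a) //= [X in _ + X]big1 ?addr0 => [|g ga]; last first.
  by apply: big1 => k _; apply: big1 => h _; rewrite /bas !ffunE (negbTE ga) mul0r scale0r; case: ifP.
apply: eq_bigr => k _.
rewrite (bigD1 b) //= [X in _ + X]big1 ?addr0 => [|h hb]; last first.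
  by rewrite /bas !ffunE (negbTE hb) mulr0 scale0r; case: ifP.
by rewrite /bas !ffunE !eqxx mulr1 scale1r.
Qed.

Lemma homP x h a b : hom x h -> hom (la (bas a) (ra x (bas b))) (a * h * b)%g.
Proof.
move=> Hx m; rewrite DLbas (bigD1 h) //= big1 ?addr0 => [|k kh]; last first.
  by rewrite Hx [h == k]eq_sym (negbTE kh) ra0 la0; case: ifP.
by rewrite Hx eqxx.
Qed.

Hypothesis Qz : forall v, \sum_(g : 'S_3) la (bas g) (ra v (bas g^-1)) = 0.

Lemma KE u h : hom u 1%g ->
  \sum_(g | (g * h * g^-1 == h)%g) la (bas (g * h)%g) (ra u (bas g^-1)) = 0.
Proof.
move=> Hu.
have Hx : hom (la (bas h) (ra u (bas 1%g))) h by move: (homP h 1%g Hu); rewrite !mulg1.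
have E := congr1 (fun v => DL v h) (Qz (la (bas h) (ra u (bas 1%g)))).
move: E; rewrite /= DL_sum; case: (DL_lin h) => _ -> _ E.
rewrite -[RHS]E big_mkcond; apply: eq_bigr => g _.
by rewrite (homP _ _ Hx) ra1 rala lala.
Qed.


Lemma anti (t : 'S_3) u : hom u 1%g -> (t * t = 1)%g -> (t^-1 = t)%g -> (t != 1)%g ->
  (forall g, (g * t * g^-1 == t)%g -> (g == 1%g) || (g == t)) ->
  ra u (bas t) = - la (bas t) u.
Proof.
move=> Hu tt ti tn1 cent.
have := KE t Hu.
rewrite (bigD1 1%g) /=; last by rewrite mul1g invg1 mulg1.
rewrite (bigD1 t) /=; last by rewrite tt mul1g ti eqxx.
rewrite big1 ?addr0; last first.
  move=> g /andP[/andP[/cent /orP[]-> //]]; by rewrite eqxx.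
rewrite mul1g invg1 ra1 tt la1 ti => /eqP; rewrite addr_eq0 => /eqP ->.
by rewrite opprK.
Qed.

Lemma anti_mul a b u : ra u (bas a) = - la (bas a) u -> ra u (bas b) = - la (bas b) u ->
  ra u (bas (a * b)%g) = la (bas (a * b)%g) u.
Proof. by move=> Ha Hb'; rewrite -rara Ha raN rala Hb' laN opprK lala. Qed.

Lemma hom1_zero u : hom u 1%g -> u = 0.
Proof.
move=> Hu.
have Ht1 := anti Hu t1t1 (tpermV _ _) t1n1 (@cent_t1).
have Ht2 := anti Hu t2t2 (tpermV _ _) t2n1 (@cent_t2).
have Hc : ra u (bas c3) = la (bas c3) u := anti_mul Ht1 Ht2.
have Hci : ra u (bas c3i) = la (bas c3i) u := anti_mul Ht2 Ht1.
have ci_inv : (c3i^-1 = c3)%g by rewrite -c3iE invgK.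
have cic : (c3i * c3 = 1)%g by rewrite -c3iE mulVg.
have ccci : (c3 * c3 * c3i = c3)%g by rewrite -c3iE mulgK.
have := KE c3 Hu.
rewrite (bigD1 1%g) /=; last by rewrite mul1g invg1 mulg1.
rewrite (bigD1 c3) /=; last by rewrite mulgK eqxx c3n1.
rewrite (bigD1 c3i) /=; last by rewrite ci_inv cic mul1g eqxx c3in1 eq_sym c3nc3i.
rewrite big1 ?addr0; last first.
  move=> g /andP[/andP[/andP[/cent_c3 /or3P[]-> //]]]; by rewrite eqxx // andbF.
rewrite mul1g invg1 ra1 c3iE Hci lala ccci ci_inv cic la1 Hc.
move=> E.
have E3 : (3%:R : R[i]) *: la (bas c3) u = 0.
  rewrite scaler_nat mulrS mulrS mulr1n. exact: E.
move: E3 => /eqP; rewrite scaler_eq0 pnatr_eq0 /= => /eqP E0.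
by rewrite -[u]la1 -cic -lala E0 la0.
Qed.

Lemma all_zero (v : V) : v = 0.
Proof.
rewrite (DL_id v); apply: big1 => k _.
have Hu := homP (k^-1)%g 1%g (hom_DL v k).
rewrite mulVg mulg1 in Hu.
have E : DL v k = la (bas k) (la (bas k^-1) (ra (DL v k) (bas 1%g))) by rewrite lala mulgV la1 ra1.
by rewrite E (hom1_zero Hu) la0.
Qed.

End Vpart.


Section Mpart.
Variables (R : realType) (n : nat) (pi : CS3 R -> 'M[R[i]]_n)
  (J : 'cV[R[i]]_n -> 'cV[R[i]]_n) (gamma D : 'M[R[i]]_n).
Hypothesis HT : finite_spectral_triple pi J gamma.
Hypothesis HD : dirac_operator pi J gamma D.
Local Notation O := (opp_rep pi J).
Local Notation bas := (bas R).
Local Notation Om := (in_OmegaD pi D).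

Lemma pi_lin : [/\ forall a b, pi (a + b) = pi a + pi b, pi 0 = 0
  & forall c a, pi (c *: a) = c *: pi a].
Proof.
case: HT => [[H _ _ _] _ _ _].
have hD u v : pi (u + v) = pi u + pi v by have := H 1 u v; rewrite !scale1r.
have h0 : pi 0 = 0 by apply: (addrI (pi 0)); rewrite -hD !addr0.
split => // c u; have := H c u 0; rewrite h0 !addr0; exact.
Qed.

Lemma piM a b : pi (mulA a b) = pi a *m pi b.
Proof. by case: HT => [[_ H _ _] _ _ _]. Qed.

Lemma piN a : pi (- a) = - pi a.
Proof. by case: pi_lin => _ _ H; rewrite -scaleN1r H scaleN1r. Qed.

Lemma pi_basis x : pi x = \sum_h x h *: pi (bas h).
Proof.
case: pi_lin => hD h0 hZ.
have Ex : x = \sum_h x h *: bas h.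
  apply/ffunP => g; rewrite sum_ffunE (bigD1 g) //= [X in _ + X]big1 => [|h hg].
    by rewrite /bas !ffunE eqxx addr0 -[RHS]/(x g * 1) mulr1.
  by rewrite /bas !ffunE eq_sym (negbTE hg) -[LHS]/(x h * 0) mulr0.
rewrite {1}Ex (big_morph pi hD h0); apply: eq_bigr => h _; by rewrite hZ.
Qed.

Lemma Ocomm a b : pi a *m O b = O b *m pi a.
Proof. by case: HT => _ _ [_ _ H] _. Qed.

Lemma OcommD a b : commut D (pi a) *m O b = O b *m commut D (pi a).
Proof.
case: HD => _ _ _ H; move: (H a b); rewrite {1}/commut => /eqP.
by rewrite subr_eq0 => /eqP.
Qed.

Lemma gpi a : gamma *m pi a = pi a *m gamma.
Proof. by case: HT => _ _ _ [_ _ _ H _]. Qed.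

Lemma gD : gamma *m D = - (D *m gamma).
Proof. by case: HD => _ _ H _; rewrite H opprK. Qed.

Lemma Om_O w b : Om w -> w *m O b = O b *m w.
Proof.
case=> s ->; rewrite mulmx_suml mulmx_sumr; apply: eq_bigr => p _.
by rewrite -mulmxA OcommD mulmxA Ocomm -mulmxA.
Qed.

Lemma Om_g w : Om w -> gamma *m w = - (w *m gamma).
Proof.
case=> s ->; rewrite mulmx_suml mulmx_sumr -sumrN; apply: eq_bigr => p _.
rewrite mulmxA gpi -!mulmxA -mulmxN; congr (_ *m _).
rewrite /commut mulmxBr mulmxBl !mulmxA gD mulNmx gpi -!mulmxA gpi gD mulmxN !mulmxA.
by rewrite opprK opprB addrC.
Qed.

Definition E w := \sum_(g : 'S_3) pi (bas g) *m w *m pi (bas g^-1%g).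

Lemma pibas g h : pi (bas g) *m pi (bas h) = pi (bas (g * h)%g).
Proof. by rewrite -piM mulA_bas. Qed.

Lemma E_pi w h : pi (bas h) *m E w = E w *m pi (bas h).
Proof.
rewrite /E mulmx_suml mulmx_sumr [in RHS](reindex_inj (mulgI h)) /=.
apply: eq_bigr => g _.
by rewrite !mulmxA pibas -!mulmxA pibas invMg mulgKV.
Qed.

Lemma E_pix w x : pi x *m E w = E w *m pi x.
Proof.
rewrite pi_basis mulmx_suml mulmx_sumr; apply: eq_bigr => h _.
by rewrite -scalemxAl E_pi scalemxAr.
Qed.

Lemma E_O w b : Om w -> E w *m O b = O b *m E w.
Proof.
move=> Hw; rewrite /E mulmx_suml mulmx_sumr; apply: eq_bigr => g _.
by rewrite -!mulmxA Ocomm (mulmxA w) Om_O // -mulmxA mulmxA Ocomm -mulmxA.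
Qed.

Lemma E_g w : Om w -> gamma *m E w = E w *m gamma.
Proof.
move=> Hw; case: HT => _ _ _ [_ _ _ _ [s ->]].
rewrite mulmx_suml mulmx_sumr; apply: eq_bigr => p _.
by rewrite -mulmxA -E_O // mulmxA E_pix -mulmxA.
Qed.

Lemma E_ga w : Om w -> gamma *m E w = - (E w *m gamma).
Proof.
move=> Hw; rewrite /E mulmx_suml mulmx_sumr -sumrN; apply: eq_bigr => g _.
by rewrite !mulmxA gpi -!mulmxA (mulmxA gamma) Om_g // mulNmx mulmxN -gpi !mulmxA.
Qed.

Lemma E0 w : Om w -> E w = 0.
Proof.
move=> Hw.
have H1 : E w *m gamma = 0.
  have := E_ga Hw; rewrite E_g // => /eqP; rewrite -addr_eq0 -mulr2n -scaler_nat.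
  by rewrite scaler_eq0 pnatr_eq0 /= => /eqP.
case: HT => _ _ _ [_ Hg _ _ _].
by rewrite -[E w]mulmx1 -Hg mulmxA H1 mul0mx.
Qed.

Lemma Om0 : Om 0.
Proof. by exists [::]; rewrite big_nil. Qed.

Lemma OmD w1 w2 : Om w1 -> Om w2 -> Om (w1 + w2).
Proof. by case=> s1 -> [s2 ->]; exists (s1 ++ s2); rewrite big_cat. Qed.

Lemma OmL a w : Om w -> Om (pi a *m w).
Proof.
case=> s ->; exists [seq (mulA a p.1, p.2) | p <- s].
rewrite big_map mulmx_sumr; apply: eq_bigr => p _.
by rewrite mulmxA piM.
Qed.

Lemma OmR w c : Om w -> Om (w *m pi c).
Proof.
case=> s ->; elim: s => [|p s IH]; first by rewrite big_nil mul0mx; exact: Om0.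
rewrite big_cons mulmxDl; apply: OmD => //.
exists [:: (p.1, mulA p.2 c); (- mulA p.1 p.2, c)].
rewrite !big_cons big_nil addr0 /= !piM piN /commut.
rewrite !mulmxBr !mulmxBl !mulNmx !mulmxA.
by rewrite opprK !piM addrACA addNr addr0.
Qed.

End Mpart.

Unset Implicit Arguments.

Theorem mainTheorem18 (R : realType) (n : nat)
  (pi : CS3 R -> 'M[R[i]]_n) (J : 'cV[R[i]]_n -> 'cV[R[i]]_n)
  (gamma D : 'M[R[i]]_n) :
  finite_spectral_triple pi J gamma ->
  dirac_operator pi J gamma D ->
  (exists w, in_OmegaD pi D w /\ w <> 0) ->
  forall (V : lmodType R[i]) (la : CS3 R -> V -> V) (ra : V -> CS3 R -> V)
    (d : CS3 R -> V) (DL DR : V -> {ffun 'S_3 -> V}),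
  is_bicovariant_fodc la ra d DL DR ->
  ~ (exists phi : 'M[R[i]]_n -> V, iso_calculi pi D la ra d phi).
Proof.
move=> HT HD [w0 [Hw0 w0n]] V la ra d DL DR Hb [phi [Hlin [HL HR] Hinj Hsurj _]].
have phiD w1 w2 : in_OmegaD pi D w1 -> in_OmegaD pi D w2 -> phi (w1 + w2) = phi w1 + phi w2.
  by move=> h1 h2; have := Hlin 1 w1 w2 h1 h2; rewrite !scale1r.
have phi0 : phi 0 = 0.
  by apply: (addrI (phi 0)); rewrite -phiD ?addr0 //; exact: Om0.
have Qz : forall v, \sum_(g : 'S_3) la (bas R g) (ra v (bas R g^-1)) = 0.
  move=> v; have [w Hw <-] := Hsurj v.
  suff -> : \sum_(g : 'S_3) la (bas R g) (ra (phi w) (bas R g^-1)) = phi (E pi w).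
    by rewrite (E0 HT HD Hw) phi0.
  rewrite /E.
  pose K (M : 'M[R[i]]_n) (x : V) := in_OmegaD pi D M /\ phi M = x.
  suff : K (\sum_(g : 'S_3) pi (bas R g) *m w *m pi (bas R g^-1))
           (\sum_(g : 'S_3) la (bas R g) (ra (phi w) (bas R g^-1))).
    by rewrite /K => -[_ ->].
  apply: (big_rec2 K); first by split; [exact: Om0 | exact: phi0].
  move=> g M x _ [HM <-]; split.
    by apply: OmD => //; apply: (OmR HT); apply: (OmL HT).
  rewrite phiD //; last by apply: (OmR HT); apply: (OmL HT).
  by rewrite -mulmxA HL ?HR //; apply: (OmR HT).
apply: w0n; apply: Hinj => //; first exact: Om0.
rewrite phi0; exact: (all_zero Hb Qz).
Qed.
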